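(* Let $M_G$ be an $n$-vertex mixed graph. Then $\rho(M_G)<\sqrt3$ if and only if every connected component of $M_G$ is switching equivalent to one of $P_1,P_2,P_3,P_4$ or $C_4^{=}$.
   Context: A mixed graph $M_G$ is obtained from a finite simple graph $G$ by orienting the edges of some subset of $E(G)$. With $\omega=\frac{1+\mathbf{i}\sqrt3}{2}$, $N(M_G)$ has $(u,v)$-entry $\omega$ if $\overrightarrow{uv}$ is an arc, $\bar\omega$ if $\overrightarrow{vu}$ is an arc, $1$ for an undirected edge, $0$ otherwise; $\rho(M_G)$ is the maximum absolute value of an eigenvalue of $N(M_G)$. $P_k$ is the undirected path on $k$ vertices; $C_4^{=}$ is the mixed $4$-cycle $v_1v_2v_3v_4v_1$ with arcs $\overrightarrow{v_1v_2},\overrightarrow{v_2v_3},\overrightarrow{v_3v_4}$ and undirected edge $\{v_4,v_1\}$. Switching: $\mathbb{T}_6=\{1,-1,\omega,\bar\omega,-\omega,-\bar\omega\}$; given a partition $V=\bigcup_{j\in\mathbb{T}_6}V_j$ into possibly empty sets, an edge or arc $xy$ has type $(j,k)$ if $x\in V_j,y\in V_k$ (arcs directed from $x$ to $y$); the partition is admissible if every undirected edge has type $(j,j)$ or $(j,\omega j)$ and every arc has type $(j,j)$, $(j,\bar\omega j)$ or $(j,-\omega j)$ for some $j$; a three-way switching replaces each undirected edge of type $(j,\omega j)$ by an arc from $V_j$ to $V_{\omega j}$, each arc of type $(j,\bar\omega j)$ by an undirected edge, and reverses each arc of type $(j,-\omega j)$. Two mixed graphs are switching equivalent if one is obtained from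 the other (up to isomorphism) by a sequence of three-way switchings and reversals of all arcs. *)

(* Defs.v *)
From HB Require Import structures.
From mathcomp Require Import all_boot all_order all_algebra all_field.
Set Implicit Arguments. Unset Strict Implicit. Unset Printing Implicit Defensive.
Import Order.TTheory GRing.Theory Num.Theory.
Local Open Scope ring_scope.

(* A mixed graph on a finite vertex type T is encoded by the relation
   between each ordered pair of vertices:
   E0   : no edge,   Eund : undirected edge {x,y},
   Efwd : arc x -> y,  Ebwd : arc y -> x. *)
Inductive entry := E0 | Eund | Efwd | Ebwd.

Definition flip_entry (e : entry) : entry :=
  match e with Efwd => Ebwd | Ebwd => Efwd | e => e end.

Definition mgraph (T : finType) := T -> T -> entry.

Definition mixed_wf (T : finType) (g : mgraph T) : Prop :=
  (forall x, g x x = E0) /\ (forall x y, g y x = flip_entry (g x y)).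

Definition madj (T : finType) (g : mgraph T) : rel T :=
  fun x y => match g x y with E0 => false | _ => true end.

Definition omega : algC := (1 + 'i * sqrtC 3) / 2.

Definition entryC (e : entry) : algC :=
  match e with E0 => 0 | Eund => 1 | Efwd => omega | Ebwd => omega^* end.

Definition Nmat (n : nat) (g : mgraph 'I_n) : 'M[algC]_n :=
  \matrix_(i, j) entryC (g i j).

Definition T6 : seq algC := [:: 1; -1; omega; omega^*; - omega; - omega^*].

(* admissibility of a partition, given by the class function c : T -> T_6 *)
Definition admissible (T : finType) (c : T -> algC) (g : mgraph T) : Prop :=
  (forall x, c x \in T6) /\
  forall x y, match g x y with
    | Eund => [|| c y == c x, c y == omega * c x | c x == omega * c y]
    | Efwd => [|| c y == c x, c y == omega^* * c x | c y == - omega * c x]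
    | Ebwd => [|| c x == c y, c x == omega^* * c y | c x == - omega * c y]
    | E0 => true
    end.

Definition three_way (T : finType) (c : T -> algC) (g : mgraph T) : mgraph T :=
  fun x y => match g x y with
    | E0 => E0
    | Eund => if c y == omega * c x then Efwd
              else if c x == omega * c y then Ebwd else Eund
    | Efwd => if c y == omega^* * c x then Eund
              else if c y == - omega * c x then Ebwd else Efwd
    | Ebwd => if c x == omega^* * c y then Eund
              else if c x == - omega * c y then Efwd else Ebwd
    end.

Definition reverse_arcs (T : finType) (g : mgraph T) : mgraph T :=
  fun x y => flip_entry (g x y).

Inductive sw_reach (T : finType) (g : mgraph T) : mgraph T -> Prop :=
  | sw_refl : sw_reach g g
  | sw_three (g' : mgraph T) (c : T -> algC) :
      sw_reach g g' -> admissible c g' -> sw_reach g (three_way c g')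
  | sw_rev (g' : mgraph T) : sw_reach g g' -> sw_reach g (reverse_arcs g').

Definition mg_iso (T1 T2 : finType) (g1 : mgraph T1) (g2 : mgraph T2) : Prop :=
  exists f : T1 -> T2, bijective f /\ forall x y, g2 (f x) (f y) = g1 x y.

Definition sw_equiv (T1 T2 : finType) (g1 : mgraph T1) (g2 : mgraph T2) : Prop :=
  (exists g' : mgraph T1, sw_reach g1 g' /\ mg_iso g' g2) \/
  (exists g' : mgraph T2, sw_reach g2 g' /\ mg_iso g' g1).

Definition comp_vert (n : nat) (g : mgraph 'I_n) (v : 'I_n) :=
  {x : 'I_n | connect (madj g) v x}.

Definition comp_graph (n : nat) (g : mgraph 'I_n) (v : 'I_n)
  : mgraph (comp_vert g v) := fun x y => g (val x) (val y).

Definition Pk (k : nat) : mgraph 'I_k :=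
  fun i j => if (i.+1 == j :> nat) || (j.+1 == i :> nat) then Eund else E0.

(* C_4^= on v1..v4 = 0..3: arcs 0->1, 1->2, 2->3, undirected {3,0} *)
Definition C4eq : mgraph 'I_4 :=
  fun i j => match nat_of_ord i, nat_of_ord j with
    | 0, 1 | 1, 2 | 2, 3 => Efwd
    | 1, 0 | 2, 1 | 3, 2 => Ebwd
    | 3, 0 | 0, 3 => Eund
    | _, _ => E0
    end%N.

Arguments comp_graph {n} g v.
Arguments Pk : clear implicits.

(* Main.v *)
Require Import Defs.
From HB Require Import structures.
From mathcomp Require Import all_boot all_order all_algebra all_field.
From mathcomp Require Import ring zify.
From Stdlib Require Import FunctionalExtensionality.
Import Order.TTheory GRing.Theory Num.Theory.
Local Open Scope ring_scope.
Set Implicit Arguments. Unset Strict Implicit. Unset Printing Implicit Defensive.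

Lemma s3sq : sqrtC 3 ^+ 2 = 3 :> algC.
Proof. exact: sqrtCK. Qed.

Lemma s3conj : (sqrtC 3 : algC)^* = sqrtC 3.
Proof. by apply: geC0_conj; rewrite sqrtC_ge0 ler0n. Qed.

Lemma om2 : omega ^+ 2 = omega - 1.
Proof.
rewrite /omega; set t := 'i * sqrtC 3.
have ht : t ^+ 2 = -3 by rewrite /t exprMn sqrCi s3sq mulN1r.
apply/eqP; rewrite -subr_eq0.
have -> : ((1 + t) / 2) ^+ 2 - ((1 + t) / 2 - 1) = (t ^+ 2 + 3) / 4.
  by field; rewrite ?pnatr_eq0.
by rewrite ht addNr mul0r.
Qed.

Lemma omconj : omega^* = 1 - omega.
Proof.
rewrite /omega rmorphM rmorphD /= rmorphM /= conjCi s3conj fmorphV /= rmorph_nat rmorph1.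
by field; rewrite ?pnatr_eq0.
Qed.

Lemma om_mulc : omega * omega^* = 1.
Proof. rewrite omconj mulrBr mulr1 -expr2 om2; ring. Qed.

Lemma omc_mul : omega^* * omega = 1.
Proof. by rewrite mulrC om_mulc. Qed.

Lemma om3 : omega ^+ 3 = -1.
Proof. rewrite exprS om2 mulrBr mulr1 -expr2 om2; ring. Qed.

Lemma om6 : omega ^+ 6 = 1.
Proof. by rewrite (_ : 6 = 3 * 2)%N // exprM om3 sqrrN expr1n. Qed.

Lemma om5 : omega ^+ 5 = omega^*.
Proof. by rewrite (_ : 5 = 3 + 2)%N // exprD om3 om2 omconj mulN1r opprB. Qed.

Lemma om_neq0 : omega != 0.
Proof.
apply/eqP => h; have := om2; rewrite h expr2 mul0r sub0r => /eqP.
by rewrite eq_sym oppr_eq0 oner_eq0.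
Qed.

Lemma om_neq1 : omega != 1.
Proof.
apply/eqP => h; have := om2; rewrite h expr1n subrr => /eqP.
by rewrite oner_eq0.
Qed.

Lemma omc_neq0 : omega^* != 0.
Proof. by rewrite conjC_eq0 om_neq0. Qed.

Lemma omc_neq1 : omega^* != 1.
Proof. by rewrite omconj subr_eq addrC -subr_eq subrr eq_sym om_neq0. Qed.

Lemma om_neq_omc : omega != omega^*.
Proof.
rewrite omconj; apply/eqP => h.
have h2 : omega = 2^-1.
  apply: (@mulfI _ 2); first by rewrite pnatr_eq0.
  by rewrite mulfV ?pnatr_eq0 // mulr_natl mulr2n {1}h subrK.
have := om2; rewrite h2 => /eqP; rewrite -subr_eq0.
have -> : 2^-1 ^+ 2 - (2^-1 - 1) = 3 / 4 :> algC by field; rewrite ?pnatr_eq0.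
by rewrite mulf_eq0 invr_eq0 !pnatr_eq0.
Qed.

Lemma T6_pow k : omega ^+ k \in T6.
Proof.
rewrite (divn_eq k 6) exprD mulnC exprM om6 expr1n mul1r.
have : (k %% 6 < 6)%N by rewrite ltn_mod.
move: (k %% 6)%N => j; rewrite !inE.
case: j => [|[|[|[|[|[|//]]]]]] _.
- by rewrite expr0 eqxx.
- by rewrite expr1 eqxx !orbT.
- by rewrite om2 omconj opprB eqxx !orbT.
- by rewrite om3 eqxx !orbT.
- by rewrite (_ : 4 = 3 + 1)%N // exprD om3 mulN1r expr1 eqxx !orbT.
- by rewrite om5 eqxx !orbT.
Qed.

Lemma T6_ex c : c \in T6 -> exists k, c = omega ^+ k.
Proof.
rewrite !inE => /or4P [/eqP->|/eqP->|/eqP->|/orP[/eqP->|/orP[/eqP->|/eqP->]]].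
- by exists 0%N.
- by exists 3%N; rewrite om3.
- by exists 1%N.
- by exists 5%N; rewrite om5.
- by exists 4%N; rewrite (_ : 4 = 3 + 1)%N // exprD om3 mulN1r.
- by exists 2%N; rewrite om2 omconj opprB.
Qed.

Lemma conj_ompow k : (omega ^+ k)^* = omega ^+ (5 * k).
Proof. by rewrite rmorphXn /= exprM om5. Qed.

Lemma T6_mul c d : c \in T6 -> d \in T6 -> c * d \in T6.
Proof. by move=> /T6_ex[k ->] /T6_ex[l ->]; rewrite -exprD T6_pow. Qed.

Lemma T6_conj c : c \in T6 -> c^* \in T6.
Proof. by move=> /T6_ex[k ->]; rewrite conj_ompow T6_pow. Qed.

Lemma T6_unit c : c \in T6 -> c * c^* = 1.
Proof.
move=> /T6_ex[k ->]; rewrite conj_ompow -exprD.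
by rewrite (_ : k + 5 * k = 6 * k)%N ?exprM ?om6 ?expr1n //; rewrite mulSn.
Qed.

Lemma T6_neq0 c : c \in T6 -> c != 0.
Proof.
move=> /T6_unit h; apply/eqP => c0; move: h; rewrite c0 mul0r => /eqP.
by rewrite eq_sym oner_eq0.
Qed.

Lemma T6_om : omega \in T6.
Proof. by rewrite !inE eqxx !orbT. Qed.
Lemma T6_omc : omega^* \in T6.
Proof. by rewrite !inE eqxx !orbT. Qed.
Lemma T6_1 : 1 \in T6.
Proof. by rewrite !inE eqxx. Qed.

Definition entry_eqb (a b : entry) :=
  match a, b with E0, E0 | Eund, Eund | Efwd, Efwd | Ebwd, Ebwd => true | _, _ => false end.
Lemma entry_eqP : Equality.axiom entry_eqb.
Proof. by case; case; constructor. Qed.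
HB.instance Definition _ := hasDecEq.Build entry entry_eqP.

Definition eigf (T : finType) (h : mgraph T) (a : algC) :=
  exists2 v : T -> algC, (exists x, v x != 0) &
    forall y, \sum_x v x * entryC (h x y) = a * v y.

Definition good (T : finType) (h : mgraph T) :=
  forall a, eigf h a -> `|a| < sqrtC 3.

Lemma entry_flip e : entryC (flip_entry e) = (entryC e)^*.
Proof.
by case: e => /=; rewrite ?rmorph0 ?rmorph1 ?conjCK.
Qed.

Lemma entry_T6 e : e != E0 -> entryC e \in T6.
Proof. by case: e => //= _; rewrite ?T6_1 ?T6_om ?T6_omc. Qed.

Lemma entry_inj : injective entryC.
Proof.
have o0 := om_neq0; have o1 := om_neq1; have c0 := omc_neq0;
have c1 := omc_neq1; have oc := om_neq_omc; have z1 := oner_neq0 algC.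
case; case => //= /eqP E; exfalso; move: E; apply/negP;
  first [ by [] | by rewrite eq_sym ].
Qed.

Lemma entry_unit e : e != E0 -> entryC e * (entryC e)^* = 1.
Proof. by move/entry_T6/T6_unit. Qed.

Lemma wf_entry (T : finType) (h : mgraph T) : mixed_wf h -> forall x y,
  entryC (h y x) = (entryC (h x y))^*.
Proof. by move=> [_ s] x y; rewrite s entry_flip. Qed.

Lemma three_way_entry (T : finType) (c : T -> algC) (h : mgraph T) : admissible c h ->
  forall x y, entryC (three_way c h x y) * c x = entryC (h x y) * c y.
Proof.
move=> [cT adm] x y; have := adm x y; rewrite /three_way.
case: (h x y) => /=.
- by rewrite !mul0r.
- case: (c y =P omega * c x) => [->|_]; first by rewrite /= mul1r.
  case: (c x =P omega * c y) => [->|_]; first by rewrite /= mulrA omc_mul !mul1r.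
  by rewrite /= !orbF => /eqP ->.
- case: (c y =P omega^* * c x) => [->|_]; first by rewrite /= mulrA om_mulc !mul1r.
  case: (c y =P - omega * c x) => [->|_].
    by rewrite /= omconj mulrA mulrN -expr2 om2 => _; ring.
  by rewrite /= !orbF => /eqP ->.
- case: (c x =P omega^* * c y) => [->|_]; first by rewrite /= mul1r.
  case: (c x =P - omega * c y) => [->|_].
    by rewrite /= omconj mulrA mulrN -expr2 om2 => _; ring.
  by rewrite /= !orbF => /eqP ->.
Qed.

Lemma gauge_eig (T : finType) (h h' : mgraph T) (c : T -> algC) :
  (forall x, c x != 0) ->
  (forall x y, entryC (h' x y) * c x = entryC (h x y) * c y) ->
  forall a, eigf h a <-> eigf h' a.
Proof.
move=> cn rel a; split.
- move=> [v [x vx] ev]; exists (fun x => v x * c x).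
    by exists x; rewrite mulf_neq0.
  move=> y; rewrite mulrA -ev mulr_suml; apply: eq_bigr => z _.
  by rewrite -mulrA [c z * _]mulrC rel mulrA.
- move=> [v [x vx] ev]; exists (fun x => v x / c x).
    by exists x; rewrite mulf_neq0 ?invr_eq0.
  move=> y; rewrite mulrA -ev mulr_suml; apply: eq_bigr => z _.
  have -> : entryC (h z y) = entryC (h' z y) * c z / c y by rewrite rel mulfK.
  by field; rewrite ?cn.
Qed.

Lemma good_gauge (T : finType) (h h' : mgraph T) (c : T -> algC) :
  (forall x, c x != 0) ->
  (forall x y, entryC (h' x y) * c x = entryC (h x y) * c y) ->
  good h <-> good h'.
Proof.
move=> cn rel; split=> G a E; apply: G; move: E; by rewrite (gauge_eig cn rel).
Qed.

Lemma good_three (T : finType) (c : T -> algC) (h : mgraph T) : admissible c h ->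
  good h <-> good (three_way c h).
Proof.
move=> adm; apply: (@good_gauge _ _ _ c).
  by move=> x; apply: T6_neq0; case: adm.
exact: three_way_entry.
Qed.

Lemma eigf_ext (T : finType) (h h' : mgraph T) : (forall x y, h x y = h' x y) ->
  forall a, eigf h a -> eigf h' a.
Proof.
move=> E a [v vx ev]; exists v => // y; rewrite -ev.
by apply: eq_bigr => x _; rewrite E.
Qed.

Lemma eigf_rev (T : finType) (h : mgraph T) a : eigf h a -> eigf (reverse_arcs h) a^*.
Proof.
move=> [v [x vx] ev]; exists (fun x => (v x)^*).
  by exists x; rewrite conjC_eq0.
move=> y; rewrite -rmorphM -ev rmorph_sum; apply: eq_bigr => z _.
by rewrite rmorphM /reverse_arcs entry_flip.
Qed.

Lemma good_rev (T : finType) (h : mgraph T) : good h <-> good (reverse_arcs h).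
Proof.
split=> G a E.
- have E2 := eigf_rev E.
  have E3 : eigf h a^*.
    by apply: eigf_ext E2 => x y; rewrite /reverse_arcs; case: (h x y).
  by rewrite -norm_conjC; apply: G.
- by rewrite -norm_conjC; apply: G; apply: eigf_rev.
Qed.

Lemma sw_reach_good (T : finType) (g g' : mgraph T) : sw_reach g g' -> good g <-> good g'.
Proof.
elim => [|g1 c _ IH adm|g1 _ IH]; first by [].
- by rewrite IH; apply: good_three.
- by rewrite IH; apply: good_rev.
Qed.

Lemma iso_good (T1 T2 : finType) (g1 : mgraph T1) (g2 : mgraph T2) :
  mg_iso g1 g2 -> good g1 <-> good g2.
Proof.
move=> [f [[f' fK f'K] E]].
have eig12 : forall a, eigf g1 a -> eigf g2 a.
  move=> a [v [x vx] ev]; exists (fun y => v (f' y)).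
    by exists (f x); rewrite fK.
  move=> y; rewrite -ev.
  rewrite (reindex f) /=; last by exists f' => z _; rewrite ?fK ?f'K.
  apply: eq_bigr => z _; rewrite fK; congr (_ * _).
  by rewrite -{1}(f'K y) E.
have eig21 : forall a, eigf g2 a -> eigf g1 a.
  move=> a [v [x vx] ev]; exists (fun y => v (f y)).
    by exists (f' x); rewrite f'K.
  move=> y; rewrite -ev.
  rewrite [RHS](reindex f) /=; last by exists f' => z _; rewrite ?fK ?f'K.
  by apply: eq_bigr => z _; rewrite E.
split=> G a E0; apply: G; auto.
Qed.

Lemma sw_equiv_good (T1 T2 : finType) (g1 : mgraph T1) (g2 : mgraph T2) :
  sw_equiv g1 g2 -> good g1 <-> good g2.
Proof.
case=> [[g' [R I]]|[g' [R I]]].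
- by rewrite (sw_reach_good R); apply: iso_good.
- by rewrite -(iso_good I) (sw_reach_good R).
Qed.

Lemma sum_sig (T : finType) (P : pred T) (F : T -> algC) :
  \sum_(s : {x | P x}) F (val s) = \sum_(x | P x) F x.
Proof.
rewrite (eq_bigl (fun x => x \in P)) //.
by rewrite [RHS]big_sub.
Qed.

Lemma eig_Nmat n (g : mgraph 'I_n) a : eigenvalue (Nmat g) a <-> eigf g a.
Proof.
split.
- move=> /eigenvalueP [v ev vn]; exists (fun x => v 0 x).
    suff /existsP [x hx] : [exists x, v 0 x != 0] by exists x.
    apply: contraNT vn; rewrite negb_exists => /forallP H.
    by apply/eqP/rowP => j; rewrite mxE; move: (H j); rewrite negbK => /eqP.
  move=> y; have /rowP /(_ y) := ev; rewrite !mxE => <-.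
  by apply: eq_bigr => x _; rewrite mxE.
- move=> [f [x fx] ef]; apply/eigenvalueP; exists (\row_x f x).
    apply/rowP => y; rewrite !mxE -ef; apply: eq_bigr => z _; by rewrite !mxE.
  by apply: contra fx => /eqP /rowP /(_ x); rewrite !mxE => ->.
Qed.

Section Comp.
Variables (n : nat) (g : mgraph 'I_n) (wf : mixed_wf g).

Lemma madj_sym x y : madj g x y = madj g y x.
Proof. by case: wf => _ s; rewrite /madj (s x y); case: (g x y). Qed.

Lemma nadj_entry x y : ~~ madj g x y -> entryC (g x y) = 0.
Proof. by rewrite /madj; case: (g x y). Qed.

Lemma comp_eig_down a : eigf g a -> exists v, eigf (comp_graph g v) a.
Proof.
move=> [f [x0 fx] ef]; exists x0.
exists (fun s : comp_vert g x0 => f (val s)).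
  by exists (exist _ x0 (connect0 _ _)).
move=> y; rewrite /comp_graph.
rewrite (sum_sig (fun x => connect (madj g) x0 x) (fun x => f x * entryC (g x (val y)))).
rewrite -ef [RHS](bigID (fun x => connect (madj g) x0 x)) /= [X in _ = _ + X]big1 ?addr0 //.
move=> x nc; rewrite nadj_entry ?mulr0 //; apply: contra nc => adj.
apply: connect_trans (valP y) _; apply: connect1; by rewrite madj_sym.
Qed.

Lemma comp_eig_up v a : eigf (comp_graph g v) a -> eigf g a.
Proof.
move=> [f [s0 fs] ef].
exists (fun x => oapp f 0 (insub x : option (comp_vert g v))).
  by exists (val s0); rewrite valK.
move=> y; rewrite (bigID (fun x => connect (madj g) v x)) /=.
rewrite [X in _ + X]big1 ?addr0; last first.
  by move=> x nc; rewrite insubN ?mul0r.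
case: (boolP (connect (madj g) v y)) => cy.
- rewrite (insubT (fun x => connect (madj g) v x) cy) /= -ef /comp_graph /=.
  rewrite -(sum_sig (fun x => connect (madj g) v x) (fun x => oapp f 0 (insub x : option (comp_vert g v)) * entryC (g x y))).
  by apply: eq_bigr => s _ /=; rewrite valK.
- rewrite insubN // mulr0 big1 // => x cx; rewrite nadj_entry ?mulr0 //.
  apply: contra cy => adj; apply: connect_trans cx _; exact: connect1.
Qed.

End Comp.

Lemma good_Nmat n (g : mgraph 'I_n) :
  (forall a : algC, eigenvalue (Nmat g) a -> `|a| < sqrtC 3) <-> good g.
Proof.
split=> H a E; apply: H; by rewrite ?eig_Nmat // -eig_Nmat.
Qed.

Lemma norm_lt_s3 (a : algC) : `|a| ^+ 2 < 3 -> `|a| < sqrtC 3.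
Proof.
move=> h; rewrite -(@ltr_pXn2r _ 2) // ?s3sq // nnegrE ?sqrtC_ge0 ?ler0n //.
Qed.

Lemma sqr_lt_s3 (a : algC) : `|a ^+ 2| < 3 -> `|a| < sqrtC 3.
Proof. by rewrite normrX => /norm_lt_s3. Qed.

Lemma eig_real (T : finType) (h : mgraph T) : mixed_wf h ->
  forall a, eigf h a -> a \is Num.real.
Proof.
move=> wf a [v [x0 vx] ev].
set S := \sum_y v y * (v y)^*.
set Q := \sum_y (\sum_x v x * entryC (h x y)) * (v y)^*.
have QS : Q = a * S.
  by rewrite /Q /S mulr_sumr; apply: eq_bigr => y _; rewrite ev mulrA.
have QE : Q = \sum_y \sum_x v x * entryC (h x y) * (v y)^*.
  by rewrite /Q; apply: eq_bigr => y _; rewrite mulr_suml.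
have Qr : Q^* = Q.
  rewrite QE rmorph_sum /=.
  under eq_bigr => y _ do rewrite rmorph_sum /=.
  rewrite exchange_big /=; apply: eq_bigr => x _; apply: eq_bigr => y _.
  rewrite !rmorphM /= conjCK -(wf_entry wf); ring.
have Sr : S^* = S.
  rewrite /S rmorph_sum; apply: eq_bigr => y _; rewrite rmorphM /= mulrC; congr (_ * _); exact: conjCK.
have S0 : S != 0.
  have : 0 < S.
    rewrite /S (bigD1 x0) //= -normCK.
    apply: (@lt_le_trans _ _ (`|v x0| ^+ 2)).
      by rewrite exprn_gt0 // normr_gt0.
    rewrite lerDl sumr_ge0 // => y _; by rewrite -normCK exprn_ge0.
  by rewrite lt_def => /andP[].
apply/CrealP; apply: (mulIf S0); rewrite -QS -Qr QS rmorphM /= Sr //.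
Qed.

Lemma sum1 (f : 'I_1 -> algC) : \sum_(x < 1) f x = f (@Ordinal 1 0 isT).
Proof. by rewrite big_ord1; congr f; apply: val_inj. Qed.

Lemma sum2 (f : 'I_2 -> algC) :
  \sum_(x < 2) f x = f (@Ordinal 2 0 isT) + f (@Ordinal 2 1 isT).
Proof.
rewrite !big_ord_recr big_ord0 /= add0r.
by congr (f _ + f _); apply: val_inj.
Qed.

Lemma sum3 (f : 'I_3 -> algC) :
  \sum_(x < 3) f x = f (@Ordinal 3 0 isT) + f (@Ordinal 3 1 isT) + f (@Ordinal 3 2 isT).
Proof.
rewrite !big_ord_recr big_ord0 /= add0r.
by congr (f _ + f _ + f _); apply: val_inj.
Qed.

Lemma sum4 (f : 'I_4 -> algC) :
  \sum_(x < 4) f x = f (@Ordinal 4 0 isT) + f (@Ordinal 4 1 isT)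
                   + f (@Ordinal 4 2 isT) + f (@Ordinal 4 3 isT).
Proof.
rewrite !big_ord_recr big_ord0 /= add0r.
by congr (f _ + f _ + f _ + f _); apply: val_inj.
Qed.

Lemma ord_cases1 (x : 'I_1) : x = @Ordinal 1 0 isT.
Proof. by apply: val_inj; case: x => [[|]]. Qed.
Lemma ord_cases2 (x : 'I_2) : x = @Ordinal 2 0 isT \/ x = @Ordinal 2 1 isT.
Proof. by case: x => [[|[|]]] // p; [left|right]; apply: val_inj. Qed.
Lemma ord_cases3 (x : 'I_3) :
  [\/ x = @Ordinal 3 0 isT, x = @Ordinal 3 1 isT | x = @Ordinal 3 2 isT].
Proof.
by case: x => [[|[|[|]]]] // p; [apply: Or31|apply: Or32|apply: Or33]; apply: val_inj.
Qed.
Lemma ord_cases4 (x : 'I_4) :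
  [\/ x = @Ordinal 4 0 isT, x = @Ordinal 4 1 isT, x = @Ordinal 4 2 isT | x = @Ordinal 4 3 isT].
Proof.
by case: x => [[|[|[|[|]]]]] // p; [apply: Or41|apply: Or42|apply: Or43|apply: Or44]; apply: val_inj.
Qed.

Lemma good_P1 : good (Pk 1).
Proof.
move=> a [v [x vx] ev]; rewrite (ord_cases1 x) in vx.
have := ev (@Ordinal 1 0 isT); rewrite sum1 /= mulr0 => /esym /eqP.
rewrite mulf_eq0 (negbTE vx) orbF => /eqP ->.
by rewrite normr0 sqrtC_gt0 ltr0n.
Qed.

Lemma good_P2 : good (Pk 2).
Proof.
move=> a [v [x vx] ev].
have e0 := ev (@Ordinal 2 0 isT); have e1 := ev (@Ordinal 2 1 isT).
rewrite sum2 /= ?mulr0 ?mulr1 ?add0r ?addr0 in e0.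
rewrite sum2 /= ?mulr0 ?mulr1 ?add0r ?addr0 in e1.
set v0 := v (@Ordinal 2 0 isT) in e0 e1; set v1 := v (@Ordinal 2 1 isT) in e0 e1.
have E0 : (a ^+ 2 - 1) * v0 = 0 by rewrite mulrBl expr2 -mulrA -e0 -e1 mul1r subrr.
have E1 : (a ^+ 2 - 1) * v1 = 0 by rewrite mulrBl expr2 -mulrA -e1 -e0 mul1r subrr.
have : a ^+ 2 = 1.
  have [|] := ord_cases2 x => xe; rewrite xe in vx.
    by move/eqP: E0; rewrite mulf_eq0 (negbTE vx) orbF subr_eq0 => /eqP.
  by move/eqP: E1; rewrite mulf_eq0 (negbTE vx) orbF subr_eq0 => /eqP.
by move=> h; apply: sqr_lt_s3; rewrite h normr1 ltr1n.
Qed.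

Lemma subr0E (x y : algC) : x = y -> x - y = 0.
Proof. by move=> ->; rewrite subrr. Qed.

Lemma good_P3 : good (Pk 3).
Proof.
move=> a [v [x vx] ev].
have e0 := ev (@Ordinal 3 0 isT); have e1 := ev (@Ordinal 3 1 isT).
have e2 := ev (@Ordinal 3 2 isT).
rewrite sum3 /= ?mulr0 ?mulr1 ?add0r ?addr0 in e0.
rewrite sum3 /= ?mulr0 ?mulr1 ?add0r ?addr0 in e1.
rewrite sum3 /= ?mulr0 ?mulr1 ?add0r ?addr0 in e2.
set v0 := v (@Ordinal 3 0 isT) in e0 e1 e2.
set v1 := v (@Ordinal 3 1 isT) in e0 e1 e2.
set v2 := v (@Ordinal 3 2 isT) in e0 e1 e2.
have E1 : (a ^+ 2 - 2) * v1 = 0.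
  have -> : (a ^+ 2 - 2) * v1 = - a * (v0 + v2 - a * v1) - (v1 - a * v0) - (v1 - a * v2) by ring.
  by rewrite (subr0E e1) (subr0E e0) (subr0E e2) mulr0 !subr0.
have [v10|v1n] := eqVneq v1 0.
- have a0 : a = 0.
    have [xe|xe|xe] := ord_cases3 x; rewrite xe in vx.
    + by move: e0; rewrite v10 => /esym/eqP; rewrite mulf_eq0 (negbTE vx) orbF => /eqP.
    + by move: vx; rewrite -/v1 v10 eqxx.
    + by move: e2; rewrite v10 => /esym/eqP; rewrite mulf_eq0 (negbTE vx) orbF => /eqP.
  by rewrite a0 normr0 sqrtC_gt0 ltr0n.
- move/eqP: E1; rewrite mulf_eq0 (negbTE v1n) orbF subr_eq0 => /eqP h.
  by apply: sqr_lt_s3; rewrite h normr_nat ltr_nat.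
Qed.

Lemma wf_Pk k : mixed_wf (Pk k).
Proof.
split=> [x|x y]; rewrite /Pk.
  by rewrite orbb eqn_leq ltnn.
by rewrite orbC; case: ifP.
Qed.

Lemma good_P4 : good (Pk 4).
Proof.
move=> a E; have ar := eig_real (wf_Pk 4) E.
move: E => [v [x vx] ev].
have e0 := ev (@Ordinal 4 0 isT); have e1 := ev (@Ordinal 4 1 isT).
have e2 := ev (@Ordinal 4 2 isT); have e3 := ev (@Ordinal 4 3 isT).
rewrite sum4 /= ?mulr0 ?mulr1 ?add0r ?addr0 in e0.
rewrite sum4 /= ?mulr0 ?mulr1 ?add0r ?addr0 in e1.
rewrite sum4 /= ?mulr0 ?mulr1 ?add0r ?addr0 in e2.
rewrite sum4 /= ?mulr0 ?mulr1 ?add0r ?addr0 in e3.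
set v0 := v (@Ordinal 4 0 isT) in e0 e1 e2 e3.
set v1 := v (@Ordinal 4 1 isT) in e0 e1 e2 e3.
set v2 := v (@Ordinal 4 2 isT) in e0 e1 e2 e3.
set v3 := v (@Ordinal 4 3 isT) in e0 e1 e2 e3.
have h1 : v1 = a * v0 by [].
have h2 : v2 = (a ^+ 2 - 1) * v0.
  have -> : v2 = (v0 + v2) - v0 by ring.
  by rewrite e1 h1; ring.
have h3 : v3 = (a ^+ 3 - 2 * a) * v0.
  have -> : v3 = (v1 + v3) - v1 by ring.
  by rewrite e2 h2 h1; ring.
have v0n : v0 != 0.
  apply/negP => /eqP v00; move: h1 h2 h3; rewrite v00 !mulr0 => h1 h2 h3.
  have [xe|xe|xe|xe] := ord_cases4 x; move: vx; rewrite xe => /eqP; apply.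
  - exact: v00.
  - exact: h1.
  - exact: h2.
  - exact: h3.
have P : (a ^+ 4 - 3 * a ^+ 2 + 1) * v0 = 0.
  have -> : (a ^+ 4 - 3 * a ^+ 2 + 1) * v0 = a * ((a ^+ 3 - 2 * a) * v0) - (a ^+ 2 - 1) * v0 by ring.
  by rewrite -h3 -h2 e3 subrr.
move/eqP: P; rewrite mulf_eq0 (negbTE v0n) orbF => /eqP P.
set b := a ^+ 2 in P.
have b0 : 0 <= b by rewrite /b -realEsqr.
have br : b \is Num.real by rewrite realE b0.
have b3 : b < 3.
  rewrite real_ltNge ?realn //; apply/negP => b3.
  have : 0 < b * (b - 3) + 1.
    by apply: (@lt_le_trans _ _ 1) => //; rewrite lerDr mulr_ge0 // subr_ge0.
  have -> : b * (b - 3) + 1 = a ^+ 4 - 3 * a ^+ 2 + 1 by rewrite /b; ring.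
  by rewrite P ltxx.
by apply: sqr_lt_s3; rewrite ger0_norm.
Qed.

Lemma good_C4eq : good C4eq.
Proof.
move=> a [v [x vx] ev].
have e0 := ev (@Ordinal 4 0 isT); have e1 := ev (@Ordinal 4 1 isT).
have e2 := ev (@Ordinal 4 2 isT); have e3 := ev (@Ordinal 4 3 isT).
rewrite sum4 /= ?mulr0 ?mulr1 ?add0r ?addr0 in e0.
rewrite sum4 /= ?mulr0 ?mulr1 ?add0r ?addr0 in e1.
rewrite sum4 /= ?mulr0 ?mulr1 ?add0r ?addr0 in e2.
rewrite sum4 /= ?mulr0 ?mulr1 ?add0r ?addr0 in e3.
set v0 := v (@Ordinal 4 0 isT) in e0 e1 e2 e3.
set v1 := v (@Ordinal 4 1 isT) in e0 e1 e2 e3.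
set v2 := v (@Ordinal 4 2 isT) in e0 e1 e2 e3.
set v3 := v (@Ordinal 4 3 isT) in e0 e1 e2 e3.
set w := omega in e0 e1 e2 e3 *; set c := omega^* in e0 e1 e2 e3 *.
have f1 : c * w - 1 = 0 by rewrite /c /w omc_mul subrr.
have f2 : c ^+ 2 + w = 0.
  rewrite /c /w omconj (_ : (1 - omega)^+2 + omega = omega^+2 - (omega - 1)); last by ring.
  by rewrite om2 subrr.
have f3 : w ^+ 2 + c = 0 by rewrite /c /w omconj om2; ring.
have E0 : (a ^+ 2 - 2) * v0 = 0.
  have -> : (a ^+ 2 - 2) * v0 = a * (a * v0 - (v1 * c + v3)) + c * (a * v1 - (v0 * w + v2 * c))
     + (a * v3 - (v0 + v2 * w)) + v2 * (c ^+ 2 + w) + v0 * (c * w - 1) by ring.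
  by rewrite (subr0E (esym e0)) (subr0E (esym e1)) (subr0E (esym e3)) f1 f2 !mulr0 !addr0.
have E1 : (a ^+ 2 - 2) * v1 = 0.
  have -> : (a ^+ 2 - 2) * v1 = a * (a * v1 - (v0 * w + v2 * c)) + w * (a * v0 - (v1 * c + v3))
     + c * (a * v2 - (v1 * w + v3 * c)) + v3 * (c ^+ 2 + w) + 2 * v1 * (c * w - 1) by ring.
  by rewrite (subr0E (esym e0)) (subr0E (esym e1)) (subr0E (esym e2)) f1 f2 !mulr0 !addr0.
have E2 : (a ^+ 2 - 2) * v2 = 0.
  have -> : (a ^+ 2 - 2) * v2 = a * (a * v2 - (v1 * w + v3 * c)) + w * (a * v1 - (v0 * w + v2 * c))
     + c * (a * v3 - (v0 + v2 * w)) + v0 * (w ^+ 2 + c) + 2 * v2 * (c * w - 1) by ring.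
  by rewrite (subr0E (esym e3)) (subr0E (esym e1)) (subr0E (esym e2)) f1 f3 !mulr0 !addr0.
have E3 : (a ^+ 2 - 2) * v3 = 0.
  have -> : (a ^+ 2 - 2) * v3 = a * (a * v3 - (v0 + v2 * w)) + (a * v0 - (v1 * c + v3))
     + w * (a * v2 - (v1 * w + v3 * c)) + v1 * (w ^+ 2 + c) + v3 * (c * w - 1) by ring.
  by rewrite (subr0E (esym e0)) (subr0E (esym e3)) (subr0E (esym e2)) f1 f3 !mulr0 !addr0.
have a2 : a ^+ 2 = 2.
  have [xe|xe|xe|xe] := ord_cases4 x; move: vx; rewrite xe => vx; apply/eqP; rewrite -subr_eq0.
  - by move/eqP: E0; rewrite mulf_eq0 (negbTE vx) orbF.
  - by move/eqP: E1; rewrite mulf_eq0 (negbTE vx) orbF.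
  - by move/eqP: E2; rewrite mulf_eq0 (negbTE vx) orbF.
  - by move/eqP: E3; rewrite mulf_eq0 (negbTE vx) orbF.
by apply: sqr_lt_s3; rewrite a2 normr_nat ltr_nat.
Qed.

Local Open Scope sesquilinear_scope.

Definition nrm m (x : 'rV[algC]_m) := \sum_i x 0 i * (x 0 i)^*.

Lemma nrm_mx m (x : 'rV[algC]_m) : nrm x = (x *m x ^t*) 0 0.
Proof. by rewrite /nrm !mxE; apply: eq_bigr => i _; rewrite !mxE. Qed.

Lemma nrm_unit m (P : 'M[algC]_m) x : P *m P ^t* = 1%:M -> nrm (x *m P) = nrm x.
Proof.
move=> PP; rewrite !nrm_mx trmx_mul map_mxM mulmxA -[x *m P *m _]mulmxA PP.
by rewrite mulmx1.
Qed.

Section Spec.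
Variables (T : finType) (h : mgraph T) (wf : mixed_wf h).
Local Notation m := #|T|.
Definition Amx : 'M[algC]_m := \matrix_(i, j) entryC (h (enum_val i) (enum_val j)).

Lemma eigA a : eigenvalue Amx a -> eigf h a.
Proof.
move=> /eigenvalueP [v ev vn]; exists (fun x => v 0 (enum_rank x)).
  suff /existsP [i hi] : [exists i, v 0 i != 0].
    by exists (enum_val i); rewrite enum_valK.
  apply: contraNT vn; rewrite negb_exists => /forallP H.
  by apply/eqP/rowP => j; rewrite mxE; move: (H j); rewrite negbK => /eqP.
move=> y; have /rowP /(_ (enum_rank y)) := ev; rewrite !mxE => <-.
rewrite (reindex (enum_val : 'I_#|T| -> T)) /=; last first.
  by exists enum_rank => z _; rewrite ?enum_valK ?enum_rankK.
by apply: eq_bigr => i _; rewrite enum_valK mxE enum_rankK.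
Qed.

Lemma A_herm : Amx ^t* = Amx.
Proof.
apply/matrixP => i j; rewrite !mxE (wf_entry wf).
exact: conjCK.
Qed.

Lemma spec_bound : good h -> forall x : 'rV_m, x != 0 -> nrm (x *m Amx) < 3 * nrm x.
Proof.
move=> G x xn.
have An : Amx \is normalmx by apply/normalmxP; rewrite A_herm.
have AE := orthomx_spectralP An.
set P := spectralmx Amx in AE; set d := spectral_diag Amx in AE.
have PU : P \is unitarymx by apply: spectral_unitarymx.
have PP : P *m P ^t* = 1%:M by apply/unitarymxP.
have PP' : P ^t* *m P = 1%:M.
  by have := mulmxKtV (1%:M) PU erefl; rewrite mul1mx.
rewrite invmx_unitary // in AE.
have PA : P *m Amx = diag_mx d *m P by rewrite AE !mulmxA PP mul1mx.
have dbound : forall i, d 0 i * (d 0 i)^* < 3.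
  move=> i.
  have ei : eigenvalue Amx (d 0 i).
    apply/eigenvalueP; exists (row i P).
      by rewrite -row_mul PA mul_diag_mx; apply/rowP => j; rewrite !mxE.
    apply/eqP => /rowP R.
    have /matrixP /(_ i i) := PP; rewrite !mxE eqxx /= => E.
    move: E; rewrite big1 => [/eqP|j _]; first by rewrite eq_sym oner_eq0.
    by have := R j; rewrite !mxE => ->; rewrite mul0r.
  have := G _ (eigA ei); rewrite -normCK => H.
  by rewrite -[3](@s3sq) ltrXn2r.
set u := x *m P ^t*.
have xu : x = u *m P by rewrite /u -mulmxA PP' mulmx1.
have un : u != 0 by apply: contraNneq xn => u0; rewrite xu u0 mul0mx.
have -> : x *m Amx = u *m diag_mx d *m P by rewrite {1}AE /u !mulmxA.
rewrite (nrm_unit _ PP) xu (nrm_unit _ PP).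
rewrite /nrm mulr_sumr -subr_gt0 -sumrB.
have [i ui] : exists i, u 0 i != 0.
  suff /existsP [i hi] : [exists i, u 0 i != 0] by exists i.
  apply: contraNT un; rewrite negb_exists => /forallP H.
  by apply/eqP/rowP => j; rewrite [RHS]mxE; move: (H j); rewrite negbK => /eqP.
have term : forall j, 3 * (u 0 j * (u 0 j)^*) - (u *m diag_mx d) 0 j * ((u *m diag_mx d) 0 j)^*
   = (u 0 j * (u 0 j)^*) * (3 - d 0 j * (d 0 j)^*).
  by move=> j; rewrite mul_mx_diag mxE rmorphM /=; ring.
rewrite (bigD1 i) //= term.
apply: (@lt_le_trans _ _ ((u 0 i * (u 0 i)^*) * (3 - d 0 i * (d 0 i)^*))).
  by rewrite mulr_gt0 // ?subr_gt0 ?dbound // -normCK exprn_gt0 // normr_gt0.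
rewrite lerDl sumr_ge0 // => j _; rewrite term mulr_ge0 //.
  by rewrite -normCK exprn_ge0.
by rewrite subr_ge0 ltW.
Qed.

End Spec.

Lemma bad_test (T : finType) (h : mgraph T) : mixed_wf h ->
  forall w : T -> algC, (exists x, w x != 0) ->
  3 * \sum_x `|w x| ^+ 2 <= \sum_y `|\sum_x w x * entryC (h x y)| ^+ 2 ->
  ~ good h.
Proof.
move=> wf w [x0 wx] H G.
set xr : 'rV[algC]_#|T| := \row_i w (enum_val i).
have xn : xr != 0.
  apply: contra wx => /eqP /rowP /(_ (enum_rank x0)); rewrite !mxE enum_rankK => ->.
  done.
have := spec_bound wf G xn.
have E1 : nrm xr = \sum_x `|w x| ^+ 2.
  rewrite /nrm [RHS](reindex (enum_val : 'I_#|T| -> T)) /=; last first.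
    by exists enum_rank => z _; rewrite ?enum_valK ?enum_rankK.
  by apply: eq_bigr => i _; rewrite mxE normCK.
have E2 : nrm (xr *m Amx h) = \sum_y `|\sum_x w x * entryC (h x y)| ^+ 2.
  rewrite /nrm [RHS](reindex (enum_val : 'I_#|T| -> T)) /=; last first.
    by exists enum_rank => z _; rewrite ?enum_valK ?enum_rankK.
  apply: eq_bigr => j _; rewrite normCK; congr (_ * _^*);
  rewrite !mxE [RHS](reindex (enum_val : 'I_#|T| -> T)) /=; try (by exists enum_rank => z _; rewrite ?enum_valK ?enum_rankK);
  by apply: eq_bigr => i _; rewrite !mxE.
by rewrite E1 E2 => /lt_le_trans /(_ H); rewrite ltxx.
Qed.

Local Close Scope sesquilinear_scope.

Lemma sum_supp (T : finType) (s : seq T) (F : T -> algC) :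
  uniq s -> (forall x, x \notin s -> F x = 0) -> \sum_x F x = \sum_(x <- s) F x.
Proof.
move=> us F0; rewrite [RHS]big_uniq // (bigID (fun x => x \in s)) /=.
by rewrite [X in _ + X]big1 ?addr0 // => x /F0.
Qed.

Lemma sum_le_supp (T : finType) (s : seq T) (F : T -> algC) :
  uniq s -> (forall x, 0 <= F x) -> \sum_(x <- s) F x <= \sum_x F x.
Proof.
move=> us F0; rewrite [X in X <= _]big_uniq // [X in _ <= X](bigID (fun x => x \in s)) /=.
by rewrite lerDl sumr_ge0.
Qed.

Lemma T6_cases c : c \in T6 ->
  [\/ c = -1, c + c^* = -1 | 1 <= c + c^*].
Proof.
rewrite !inE => /or4P [/eqP->|/eqP->|/eqP->|/orP[/eqP->|/orP[/eqP->|/eqP->]]].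
- by apply: Or33; rewrite rmorph1 lerDl ler01.
- by apply: Or31.
- by apply: Or33; rewrite omconj addrC subrK.
- by apply: Or33; rewrite conjCK omconj subrK.
- by apply: Or32; rewrite rmorphN /= omconj; ring.
- by apply: Or32; rewrite rmorphN /= conjCK omconj; ring.
Qed.

Lemma sw_target (T : finType) (h t : mgraph T) (c : T -> algC) :
  (forall x, c x \in T6) ->
  (forall x y, entryC (h x y) * c y = entryC (t x y) * c x) -> sw_reach h t.
Proof.
move=> cT rel.
have cn : forall x, c x != 0 by move=> x; exact: T6_neq0.
have omc2 : omega^* ^+ 2 = - omega.
  rewrite omconj (_ : (1 - omega) ^+ 2 = omega ^+ 2 - 2 * omega + 1); last by ring.
  rewrite om2; ring.
have adm : admissible c h.
  split=> // x y; have := rel x y.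
  case: (h x y) => //=; case: (t x y) => /= E.
  - by move: (cn y); rewrite -[c y]mul1r E mul0r eqxx.
  - by rewrite !mul1r in E; rewrite E eqxx.
  - by rewrite mul1r in E; rewrite E eqxx orbT.
  - rewrite mul1r in E; rewrite E mulrA om_mulc mul1r eqxx; by rewrite !orbT.
  - have : omega * c y = 0 by rewrite E mul0r.
    move/eqP; rewrite mulf_eq0 (negbTE om_neq0) /= => /eqP cy0.
    by move: (cn y); rewrite cy0 eqxx.
  - rewrite mul1r in E.
    have -> : c y = omega^* * c x by rewrite -E mulrA omc_mul mul1r.
    by rewrite eqxx orbT.
  - have -> : c y = c x by apply: (mulfI om_neq0).
    by rewrite eqxx.
  - have -> : c y = - omega * c x.
      apply: (mulfI om_neq0); rewrite E mulrA mulrN -expr2 om2 omconj; ring.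
    by rewrite eqxx !orbT.
  - have : omega^* * c y = 0 by rewrite E mul0r.
    move/eqP; rewrite mulf_eq0 (negbTE omc_neq0) /= => /eqP cy0.
    by move: (cn y); rewrite cy0 eqxx.
  - by rewrite mul1r in E; rewrite -E eqxx orbT.
  - have -> : c x = - omega * c y.
      apply: (mulfI om_neq0); rewrite -E mulrA mulrN -expr2 om2 omconj; ring.
    by rewrite eqxx !orbT.
  - have -> : c y = c x by apply: (mulfI omc_neq0).
    by rewrite eqxx.
have E : three_way c h = t.
  apply: functional_extensionality => x; apply: functional_extensionality => y.
  apply: entry_inj; apply: (mulIf (cn x)).
  by rewrite three_way_entry // rel.
by rewrite -E; apply: sw_three => //; exact: sw_refl.
Qed.

Section Graph.
Variables (T : finType) (h : mgraph T) (wf : mixed_wf h).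

Lemma madj_symT x y : madj h x y = madj h y x.
Proof. by case: wf => _ s; rewrite /madj (s x y); case: (h x y). Qed.

Lemma adj_neq x y : madj h x y -> h x y != E0.
Proof. by rewrite /madj; case: (h x y). Qed.

Lemma nadj_E0 x y : ~~ madj h x y -> h x y = E0.
Proof. by rewrite /madj; case: (h x y). Qed.

Lemma norm_adj x y : madj h x y -> `|entryC (h x y)| ^+ 2 = 1.
Proof. by move/adj_neq => /entry_unit; rewrite normCK. Qed.

Lemma sum_single (x : T) (F : T -> algC) : \sum_z (z == x)%:R * F z = F x.
Proof.
rewrite (sum_supp (s := [:: x])) //= ?big_cons ?big_nil ?eqxx ?mul1r ?addr0 //.
by move=> z; rewrite inE => /negbTE ->; rewrite mul0r.
Qed.

Lemma deg3_bad x a b c : madj h x a -> madj h x b -> madj h x c ->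
  a != b -> a != c -> b != c -> ~ good h.
Proof.
move=> xa xb xc ab ac bc.
apply: (@bad_test _ _ wf (fun z => (z == x)%:R)).
  by exists x; rewrite eqxx oner_eq0.
have -> : \sum_z `|(z == x)%:R| ^+ 2 = 1 :> algC.
  rewrite (sum_supp (s := [:: x])) //= ?big_cons ?big_nil ?eqxx ?normr1 ?expr1n ?addr0 //.
  by move=> z; rewrite inE => /negbTE ->; rewrite normr0 expr0n.
under [X in _ <= X]eq_bigr => y _ do rewrite (sum_single x (fun z => entryC (h z y))).
have L := sum_le_supp (s := [:: a; b; c]) (F := fun y => `|entryC (h x y)| ^+ 2).
apply: le_trans (L _ _).
- by rewrite !big_cons big_nil !norm_adj // addr0 mulr1.
- by rewrite /= !inE negb_or ab ac bc.
- by move=> y; rewrite exprn_ge0.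
Qed.

Definition deg2 := forall x a b c, madj h x a -> madj h x b -> madj h x c ->
  a != b -> a != c -> b != c -> False.

Definition gp (s : seq T) := uniq s && (if s is x :: q then path (madj h) x q else false).

Lemma ham_path (x0 : T) : deg2 -> (forall x y, connect (madj h) x y) ->
  exists x q, [/\ uniq (x :: q), path (madj h) x q & forall z, z \in x :: q].
Proof.
move=> D conn.
pose P n := [exists t : n.-tuple T, gp t].
have exP : exists n, P n by exists 1%N; apply/existsP; exists [tuple x0].
have ubP : forall n, P n -> (n <= #|T|)%N.
  move=> n /existsP [t /andP [ut _]].
  by rewrite -(size_tuple t) -(card_uniqP ut) max_card.
have [k /existsP [t gt] maxk] := ex_maxnP exP ubP.
have maxs : forall s, gp s -> (size s <= k)%N.
  by move=> s gs; apply: maxk; apply/existsP; exists (in_tuple s).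
move: gt; rewrite /gp; case: (tval t) (size_tuple t) => [//|x q] St /andP [ut pq].
have Sq : size q = k.-1 by rewrite -St.
have clos : forall y z, y \in x :: q -> madj h y z -> z \in x :: q.
  move=> y z yin yz; apply: contraT => zn.
  have [yx|yx] := eqVneq y x.
    have : gp [:: z, x & q] by rewrite /gp cons_uniq zn ut /= pq andbT madj_symT -yx yz.
    by move/maxs; rewrite -St /= ltnn.
  have [yl|yl] := eqVneq y (last x q).
    have : gp (x :: rcons q z).
      rewrite /gp -rcons_cons rcons_uniq zn ut /= rcons_path pq /= -yl yz //.
    by move/maxs; rewrite -St /= size_rcons ltnn.
  set i := index y (x :: q).
  have iS : (i < size (x :: q))%N by rewrite index_mem.
  have yi : nth x0 (x :: q) i = y by rewrite nth_index.
  have i0 : i <> 0%N by move=> i0; move: yi; rewrite i0 /= => /esym; apply/eqP.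
  have iL : i <> size q.
    by move=> iL; move: yi; rewrite iL -last_nth => yE; move: yl; rewrite yE eqxx.
  have iq : (i < size q)%N by move: iS; rewrite /= ltnS leq_eqVlt => /orP[/eqP|].
  have adj : forall j, (j < size q)%N -> madj h (nth x0 (x :: q) j) (nth x0 (x :: q) j.+1).
    by move=> j jq; move/pathP: pq => /(_ x0 j jq).
  have ip : (0 < i)%N by rewrite lt0n; apply/eqP.
  have sx : size (x :: q) = (size q).+1 by [].
  exfalso; apply: (D y (nth x0 (x :: q) i.-1) (nth x0 (x :: q) i.+1) z).
  - rewrite madj_symT -yi; have := adj i.-1; rewrite prednK //; apply; lia.
  - by rewrite -yi; apply: adj.
  - exact: yz.
  - rewrite nth_uniq // ?sx; try lia; apply/eqP; lia.
  - by apply: contraNneq zn => <-; apply: mem_nth; rewrite sx; lia.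
  - by apply: contraNneq zn => <-; apply: mem_nth; rewrite sx; lia.
exists x, q; split=> // z.
have H : forall s w, w \in x :: q -> path (madj h) w s -> last w s \in x :: q.
  elim => [//|y s IH] w win /= /andP [wy ps]; apply: IH ps; exact: clos win wy.
have /connectP [s ps ->] := conn x z.
by apply: H ps; exact: mem_head.
Qed.

End Graph.

Section Sub.
Variables (T : finType) (k : nat) (g : 'I_k -> T) (ginj : injective g).

Lemma sum_img (F : T -> algC) : (forall z, (forall i, g i != z) -> F z = 0) ->
  \sum_z F z = \sum_i F (g i).
Proof.
move=> F0; rewrite (bigID (fun z => z \in [set g i | i in predT])) /=.
rewrite [X in _ + X]big1 ?addr0; last first.
  move=> z zn; apply: F0 => i; apply: contraNneq zn => <-.
  by apply: imset_f.
by rewrite big_imset //= => i j _ _; apply: ginj.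
Qed.

Lemma sum_img_le (F : T -> algC) : (forall z, 0 <= F z) ->
  \sum_i F (g i) <= \sum_z F z.
Proof.
move=> F0; rewrite [X in _ <= X](bigID (fun z => z \in [set g i | i in predT])) /=.
rewrite big_imset /=; last by move=> i j _ _; apply: ginj.
by rewrite lerDl sumr_ge0.
Qed.

Definition extw (r : 'I_k -> algC) (z : T) : algC := oapp r 0 [pick i | g i == z].

Lemma extw_g r i : extw r (g i) = r i.
Proof.
rewrite /extw; case: pickP => [j /eqP /ginj -> //|/(_ i)].
by rewrite eqxx.
Qed.

Lemma extw_0 r z : (forall i, g i != z) -> extw r z = 0.
Proof.
move=> H; rewrite /extw; case: pickP => [j gj|//].
by move: (H j); rewrite gj.
Qed.

Lemma bad_sub (h : mgraph T) (wf : mixed_wf h) (r : 'I_k -> algC) :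
  (exists i, r i != 0) ->
  3 * \sum_i `|r i| ^+ 2 <= \sum_j `|\sum_i r i * entryC (h (g i) (g j))| ^+ 2 ->
  ~ good h.
Proof.
move=> [i0 ri] H; apply: (@bad_test _ _ wf (extw r)).
  by exists (g i0); rewrite extw_g.
rewrite (sum_img (F := fun z => `|extw r z| ^+ 2)); last first.
  by move=> z zn; rewrite extw_0 // normr0 expr0n.
under eq_bigr => i _ do rewrite extw_g.
apply: le_trans H _.
have E : forall y, \sum_x extw r x * entryC (h x y) = \sum_i r i * entryC (h (g i) y).
  move=> y; rewrite (sum_img (F := fun x => extw r x * entryC (h x y))).
    by apply: eq_bigr => i _; rewrite extw_g.
  by move=> z zn; rewrite extw_0 // mul0r.
under [X in _ <= X]eq_bigr => y _ do rewrite E.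
apply: (sum_img_le (F := fun y => `|\sum_i r i * entryC (h (g i) y)| ^+ 2)).
by move=> z; rewrite exprn_ge0.
Qed.

End Sub.

Lemma nth_inj (T : finType) (x0 : T) (s : seq T) k : (k <= size s)%N -> uniq s ->
  injective (fun i : 'I_k => nth x0 s i).
Proof.
move=> ks us i j /eqP; rewrite nth_uniq //.
- by move=> /eqP E; apply: val_inj.
- by apply: leq_trans ks.
- by apply: leq_trans ks.
Qed.

Lemma nth_bij (T : finType) (x0 : T) (s : seq T) k : size s = k -> uniq s ->
  (forall z, z \in s) -> bijective (fun i : 'I_k => nth x0 s i).
Proof.
move=> ks us alls.
have lt : forall z, (index z s < k)%N by move=> z; rewrite -ks index_mem.
exists (fun z => Ordinal (lt z)).
  by move=> i; apply: val_inj => /=; rewrite index_uniq // ks.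
by move=> z /=; rewrite nth_index.
Qed.

Lemma equiv_via (T : finType) (h : mgraph T) k (X : mgraph 'I_k) (g : 'I_k -> T)
  (c : 'I_k -> algC) : bijective g -> (forall i, c i \in T6) ->
  (forall i j, entryC (X i j) * c j = entryC (h (g i) (g j)) * c i) ->
  sw_equiv h X.
Proof.
move=> bg cT rel; right; exists (fun i j => h (g i) (g j)); split.
  exact: sw_target cT rel.
by exists g; split.
Qed.

Lemma good_via (T : finType) (h : mgraph T) k (g : 'I_k -> T) :
  bijective g -> good h -> good (fun i j => h (g i) (g j)).
Proof.
move=> bg; have I : mg_iso (fun i j => h (g i) (g j)) h by exists g.
by rewrite (iso_good I).
Qed.

Lemma omc_inv : omega^* = omega^-1.
Proof. by apply: (mulfI om_neq0); rewrite om_mulc mulfV // om_neq0. Qed.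

Lemma entry_inv e : e != E0 -> (entryC e)^* = (entryC e)^-1.
Proof.
move=> en; have u := entry_unit en.
apply: (mulfI (T6_neq0 (entry_T6 en))); rewrite u mulfV //.
exact: T6_neq0 (entry_T6 en).
Qed.

Section Cases.
Variables (T : finType) (h : mgraph T) (wf : mixed_wf h).

Lemma diagE x : h x x = E0.
Proof. by case: wf. Qed.

Lemma symE0 x y : h x y = E0 -> h y x = E0.
Proof. by case: wf => _ s; rewrite (s x y) => ->. Qed.

Lemma revE x y : h x y != E0 -> entryC (h y x) = (entryC (h x y))^-1.
Proof. by move=> n; rewrite (wf_entry wf) entry_inv. Qed.

Lemma entry_nz x y : h x y != E0 -> entryC (h x y) != 0.
Proof. by move/entry_T6/T6_neq0. Qed.

Lemma case_P1 (x1 : T) : (forall z, z \in [:: x1]) -> sw_equiv h (Pk 1).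
Proof.
move=> all.
apply: (equiv_via (g := (fun i : 'I_1 => nth x1 [:: x1] i)) (c := fun _ => 1)).
- exact: nth_bij.
- by move=> _; exact: T6_1.
- move=> i j; rewrite (ord_cases1 i) (ord_cases1 j) /= diagE.
  by rewrite /=.
Qed.

Lemma case_P2 (x1 x2 : T) : uniq [:: x1; x2] -> (forall z, z \in [:: x1; x2]) ->
  h x1 x2 != E0 -> sw_equiv h (Pk 2).
Proof.
move=> us all a12.
have n1 := entry_nz a12; have R21 := revE a12.
set e1 := entryC (h x1 x2) in n1 R21 *.
apply: (equiv_via (g := (fun i : 'I_2 => nth x1 [:: x1; x2] i))
   (c := fun i : 'I_2 => nth 0 [:: 1; e1] i)).
- exact: nth_bij.
- move=> i; have [->|->] := ord_cases2 i; rewrite /= ?T6_1 //.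
  exact: entry_T6.
- move=> i j; have [->|->] := ord_cases2 i; have [->|->] := ord_cases2 j;
  rewrite /= ?diagE ?R21 /= -/e1; by field.
Qed.

Lemma case_P3 (x1 x2 x3 : T) : uniq [:: x1; x2; x3] -> (forall z, z \in [:: x1; x2; x3]) ->
  h x1 x2 != E0 -> h x2 x3 != E0 -> h x1 x3 = E0 -> sw_equiv h (Pk 3).
Proof.
move=> us all a12 a23 E13; have E31 := symE0 E13.
have n1 := entry_nz a12; have R21 := revE a12.
have n2 := entry_nz a23; have R32 := revE a23.
set e1 := entryC (h x1 x2) in n1 R21 *.
set e2 := entryC (h x2 x3) in n2 R32 *.
apply: (equiv_via (g := (fun i : 'I_3 => nth x1 [:: x1; x2; x3] i))
   (c := fun i : 'I_3 => nth 0 [:: 1; e1; e1 * e2] i)).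
- exact: nth_bij.
- move=> i; have [->|->|->] := ord_cases3 i; rewrite /= ?T6_1 //.
    exact: entry_T6.
  by apply: T6_mul; apply: entry_T6.
- move=> i j; have [->|->|->] := ord_cases3 i; have [->|->|->] := ord_cases3 j;
  rewrite /= ?diagE ?R21 ?R32 ?E13 ?E31 /= -/e1 -/e2; by field.
Qed.

Lemma case_P4 (x1 x2 x3 x4 : T) : uniq [:: x1; x2; x3; x4] ->
  (forall z, z \in [:: x1; x2; x3; x4]) ->
  h x1 x2 != E0 -> h x2 x3 != E0 -> h x3 x4 != E0 ->
  h x1 x3 = E0 -> h x2 x4 = E0 -> h x1 x4 = E0 -> sw_equiv h (Pk 4).
Proof.
move=> us all a12 a23 a34 E13 E24 E14.
have E31 := symE0 E13; have E42 := symE0 E24; have E41 := symE0 E14.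
have n1 := entry_nz a12; have R21 := revE a12.
have n2 := entry_nz a23; have R32 := revE a23.
have n3 := entry_nz a34; have R43 := revE a34.
set e1 := entryC (h x1 x2) in n1 R21 *.
set e2 := entryC (h x2 x3) in n2 R32 *.
set e3 := entryC (h x3 x4) in n3 R43 *.
apply: (equiv_via (g := (fun i : 'I_4 => nth x1 [:: x1; x2; x3; x4] i))
   (c := fun i : 'I_4 => nth 0 [:: 1; e1; e1 * e2; e1 * e2 * e3] i)).
- exact: nth_bij.
- move=> i; have [->|->|->|->] := ord_cases4 i; rewrite /= ?T6_1 //.
  + exact: entry_T6.
  + by apply: T6_mul; apply: entry_T6.
  + by apply: T6_mul; [apply: T6_mul|]; apply: entry_T6.
- move=> i j; have [->|->|->|->] := ord_cases4 i; have [->|->|->|->] := ord_cases4 j;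
  rewrite /= ?diagE ?R21 ?R32 ?R43 ?E13 ?E31 ?E24 ?E42 ?E14 ?E41 /= -/e1 -/e2 -/e3; by field.
Qed.


Lemma omi3 : omega^-1 ^+ 3 = -1.
Proof. by rewrite -omc_inv -rmorphXn /= om3 rmorphN rmorph1. Qed.

Lemma T6_N1 : -1 \in T6.
Proof. by rewrite !inE eqxx orbT. Qed.

Lemma case_C4eq (x1 x2 x3 x4 : T) : uniq [:: x1; x2; x3; x4] ->
  (forall z, z \in [:: x1; x2; x3; x4]) ->
  h x1 x2 != E0 -> h x2 x3 != E0 -> h x3 x4 != E0 -> h x4 x1 != E0 ->
  h x1 x3 = E0 -> h x2 x4 = E0 ->
  entryC (h x1 x2) * entryC (h x2 x3) * entryC (h x3 x4) * entryC (h x4 x1) = -1 ->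
  sw_equiv h C4eq.
Proof.
move=> us all a12 a23 a34 a41 E13 E24 psi.
have E31 := symE0 E13; have E42 := symE0 E24.
have n1 := entry_nz a12; have R21 := revE a12.
have n2 := entry_nz a23; have R32 := revE a23.
have n3 := entry_nz a34; have R43 := revE a34.
have n4 := entry_nz a41; have R14 := revE a41.
set e1 := entryC (h x1 x2) in n1 R21 psi *.
set e2 := entryC (h x2 x3) in n2 R32 psi *.
set e3 := entryC (h x3 x4) in n3 R43 psi *.
set e4 := entryC (h x4 x1) in n4 R14 psi *.
have E4 : e4 = - (e1 * e2 * e3)^-1.
  apply: (mulfI (mulf_neq0 (mulf_neq0 n1 n2) n3)); rewrite psi mulrN mulfV //.
  by rewrite !mulf_neq0.
have wn := om_neq0.
apply: (equiv_via (g := (fun i : 'I_4 => nth x1 [:: x1; x2; x3; x4] i))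
   (c := fun i : 'I_4 => nth 0 [:: 1; e1 * omega^*; e1 * e2 * omega^* ^+ 2;
                                  e1 * e2 * e3 * omega^* ^+ 3] i)).
- exact: nth_bij.
- have T1 := entry_T6 a12; have T2 := entry_T6 a23; have T3 := entry_T6 a34.
  have Tc := T6_omc.
  move=> i; have [->|->|->|->] := ord_cases4 i; rewrite /= ?T6_1 //.
  + exact: T6_mul.
  + by rewrite expr2 !T6_mul.
  + by rewrite !exprS expr0 mulr1 !T6_mul.
- move=> i j; have [->|->|->|->] := ord_cases4 i; have [->|->|->|->] := ord_cases4 j;
  rewrite /= ?diagE ?R21 ?R32 ?R43 ?R14 ?E13 ?E31 ?E24 ?E42 /= -/e1 -/e2 -/e3 -/e4 ?omc_inv;
  try (field; by rewrite ?n1 ?n2 ?n3 ?n4 ?wn).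
  all: try (rewrite E4; field; by rewrite ?n1 ?n2 ?n3 ?n4 ?wn).
  all: rewrite omi3 E4; field; by rewrite ?n1 ?n2 ?n3 ?n4 ?wn.
Qed.

End Cases.

Lemma T6_inv c : c \in T6 -> c^* = c^-1.
Proof.
move=> cT; apply: (mulfI (T6_neq0 cT)); rewrite T6_unit // mulfV //.
exact: T6_neq0.
Qed.

Lemma psi_cases c : c \in T6 -> c = -1 \/ c + c^-1 = -1 \/ 1 <= c + c^-1.
Proof.
move=> cT; rewrite -T6_inv //; case: (T6_cases cT) => E; [left | right; left | right; right]; done.
Qed.

Lemma psi_le c : c \in T6 -> c + c^-1 <= -1 \/ 1 <= c + c^-1.
Proof.
move=> cT; case: (psi_cases cT) => [E|[E|E]].
- by left; rewrite E invrN invr1 -opprD lerN2 lerDl ler01.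
- by left; rewrite E.
- by right.
Qed.

Lemma sum5 (f : 'I_5 -> algC) :
  \sum_(x < 5) f x = f (@Ordinal 5 0 isT) + f (@Ordinal 5 1 isT)
                   + f (@Ordinal 5 2 isT) + f (@Ordinal 5 3 isT) + f (@Ordinal 5 4 isT).
Proof.
rewrite !big_ord_recr big_ord0 /= add0r.
by congr (f _ + f _ + f _ + f _ + f _); apply: val_inj.
Qed.

Section Bad.
Variables (T : finType) (h : mgraph T) (wf : mixed_wf h).

Lemma case_C3 (x1 x2 x3 : T) : uniq [:: x1; x2; x3] ->
  h x1 x2 != E0 -> h x2 x3 != E0 -> h x3 x1 != E0 -> ~ good h.
Proof.
move=> us a12 a23 a31.
have n1 := entry_nz a12; have R21 := revE wf a12; have C1 := entry_inv a12.
have n2 := entry_nz a23; have R32 := revE wf a23; have C2 := entry_inv a23.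
have n3 := entry_nz a31; have R13 := revE wf a31; have C3 := entry_inv a31.
have pT : entryC (h x1 x2) * entryC (h x2 x3) * entryC (h x3 x1) \in T6.
  by rewrite !T6_mul ?entry_T6.
set e1 := entryC (h x1 x2) in n1 R21 C1 pT *.
set e2 := entryC (h x2 x3) in n2 R32 C2 pT *.
set e3 := entryC (h x3 x1) in n3 R13 C3 pT *.
set g := fun i : 'I_3 => nth x1 [:: x1; x2; x3] i.
have ginj : injective g by apply: nth_inj.
have [sl|sg] := psi_le pT.
- apply: (bad_sub ginj wf (r := fun i : 'I_3 => nth 0 [:: 1; - e1; e1 * e2] i)).
    by exists (@Ordinal 3 0 isT); rewrite /= oner_eq0.
  rewrite !sum3 /= ?(diagE wf) ?R21 ?R32 ?R13 /= -/e1 -/e2 -/e3.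
  rewrite !normCK !(rmorphD, rmorphM, rmorphN, rmorph1, rmorph0, fmorphV) /= C1 C2 C3 !invrK.
  rewrite -subr_ge0.
  match goal with |- is_true (0 <= ?X) =>
    have -> : X = 2 * (-1 - (e1 * e2 * e3 + (e1 * e2 * e3)^-1)) + 1 by field; rewrite ?n1 ?n2 ?n3 end.
  by rewrite addr_ge0 // mulr_ge0 // subr_ge0.
- apply: (bad_sub ginj wf (r := fun i : 'I_3 => nth 0 [:: 1; e1; e1 * e2] i)).
    by exists (@Ordinal 3 0 isT); rewrite /= oner_eq0.
  rewrite !sum3 /= ?(diagE wf) ?R21 ?R32 ?R13 /= -/e1 -/e2 -/e3.
  rewrite !normCK !(rmorphD, rmorphM, rmorphN, rmorph1, rmorph0, fmorphV) /= C1 C2 C3 !invrK.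
  rewrite -subr_ge0.
  match goal with |- is_true (0 <= ?X) =>
    have -> : X = 2 * ((e1 * e2 * e3 + (e1 * e2 * e3)^-1) - 1) + 1 by field; rewrite ?n1 ?n2 ?n3 end.
  by rewrite addr_ge0 // mulr_ge0 // subr_ge0.
Qed.

Lemma case_C4bad (x1 x2 x3 x4 : T) : uniq [:: x1; x2; x3; x4] ->
  h x1 x2 != E0 -> h x2 x3 != E0 -> h x3 x4 != E0 -> h x4 x1 != E0 ->
  h x1 x3 = E0 -> h x2 x4 = E0 ->
  1 <= (entryC (h x1 x2) * entryC (h x2 x3) * entryC (h x3 x4) * entryC (h x4 x1)) + (entryC (h x1 x2) * entryC (h x2 x3) * entryC (h x3 x4) * entryC (h x4 x1))^-1 ->
  ~ good h.
Proof.
move=> us a12 a23 a34 a41 E13 E24 sg.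
have E31 := symE0 wf E13; have E42 := symE0 wf E24.
have n1 := entry_nz a12; have R21 := revE wf a12; have C1 := entry_inv a12.
have n2 := entry_nz a23; have R32 := revE wf a23; have C2 := entry_inv a23.
have n3 := entry_nz a34; have R43 := revE wf a34; have C3 := entry_inv a34.
have n4 := entry_nz a41; have R14 := revE wf a41; have C4 := entry_inv a41.
set e1 := entryC (h x1 x2) in n1 R21 C1 sg *.
set e2 := entryC (h x2 x3) in n2 R32 C2 sg *.
set e3 := entryC (h x3 x4) in n3 R43 C3 sg *.
set e4 := entryC (h x4 x1) in n4 R14 C4 sg *.
set g := fun i : 'I_4 => nth x1 [:: x1; x2; x3; x4] i.
have ginj : injective g by apply: nth_inj.
apply: (bad_sub ginj wf (r := fun i : 'I_4 => nth 0 [:: 1; e1; e1 * e2; e1 * e2 * e3] i)).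
  by exists (@Ordinal 4 0 isT); rewrite /= oner_eq0.
rewrite !sum4 /= ?(diagE wf) ?R21 ?R32 ?R43 ?R14 ?E13 ?E31 ?E24 ?E42 /= -/e1 -/e2 -/e3 -/e4.
rewrite !normCK !(rmorphD, rmorphM, rmorphN, rmorph1, rmorph0, fmorphV) /= C1 C2 C3 C4 !invrK.
rewrite -subr_ge0.
match goal with |- is_true (0 <= ?X) =>
  have -> : X = 2 * ((e1 * e2 * e3 * e4 + (e1 * e2 * e3 * e4)^-1) - 1) + 2
    by field; rewrite ?n1 ?n2 ?n3 ?n4 end.
by rewrite addr_ge0 // mulr_ge0 // subr_ge0.
Qed.

Lemma case_C4exact (x1 x2 x3 x4 : T) : uniq [:: x1; x2; x3; x4] ->
  (forall z, z \in [:: x1; x2; x3; x4]) ->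
  h x1 x2 != E0 -> h x2 x3 != E0 -> h x3 x4 != E0 -> h x4 x1 != E0 ->
  h x1 x3 = E0 -> h x2 x4 = E0 ->
  (entryC (h x1 x2) * entryC (h x2 x3) * entryC (h x3 x4) * entryC (h x4 x1)) + (entryC (h x1 x2) * entryC (h x2 x3) * entryC (h x3 x4) * entryC (h x4 x1))^-1 = -1 ->
  ~ good h.
Proof.
move=> us all a12 a23 a34 a41 E13 E24 sg G.
have E31 := symE0 wf E13; have E42 := symE0 wf E24.
have n1 := entry_nz a12; have R21 := revE wf a12.
have n2 := entry_nz a23; have R32 := revE wf a23.
have n3 := entry_nz a34; have R43 := revE wf a34.
have n4 := entry_nz a41; have R14 := revE wf a41.
set e1 := entryC (h x1 x2) in n1 R21 sg *.
set e2 := entryC (h x2 x3) in n2 R32 sg *.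
set e3 := entryC (h x3 x4) in n3 R43 sg *.
set e4 := entryC (h x4 x1) in n4 R14 sg *.
set g := fun i : 'I_4 => nth x1 [:: x1; x2; x3; x4] i.
have gb : bijective g by apply: nth_bij.
have G' := good_via gb G.
set s := sqrtC 3 : algC.
have hs : s ^+ 2 = 3 by exact: s3sq.
have pn : e1 * e2 * e3 * e4 != 0 by rewrite !mulf_neq0.
have hp : (e1 * e2 * e3 * e4) ^+ 2 + e1 * e2 * e3 * e4 + 1 = 0.
  apply: (mulIf (invr_neq0 pn)); rewrite mul0r !mulrDl mul1r expr2 mulfK //.
  by rewrite mulfV // addrAC sg addNr.
set p := e1 * e2 * e3 * e4 in hp pn.
have E : eigf (fun i j => h (g i) (g j)) s.
  exists (fun i : 'I_4 => nth 0 [:: 3; s * (1 - p) * e1; - 3 * p * e1 * e2;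
                                 - s * (1 + 2 * p) * e1 * e2 * e3] i).
    by exists (@Ordinal 4 0 isT); rewrite /= pnatr_eq0.
  move=> j; have [->|->|->|->] := ord_cases4 j;
  rewrite !sum4 /= ?(diagE wf) ?R21 ?R32 ?R43 ?R14 ?E13 ?E31 ?E24 ?E42 /= -/e1 -/e2 -/e3 -/e4.
  - match goal with |- ?L = ?R =>
      have -> : L = R + (- 2 * s) * (p ^+ 2 + p + 1) by rewrite /p; field; rewrite ?n1 ?n2 ?n3 ?n4 end.
    by rewrite hp mulr0 addr0.
  - match goal with |- ?L = ?R =>
      have -> : L = R - (1 - p) * e1 * (s ^+ 2 - 3) by rewrite /p; field; rewrite ?n1 ?n2 ?n3 ?n4 end.
    by rewrite hs subrr mulr0 subr0.
  - by rewrite /p; field; rewrite ?n1 ?n2 ?n3 ?n4.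
  - match goal with |- ?L = ?R =>
      have -> : L = R + e1 * e2 * e3 * 3 / p * (p ^+ 2 + p + 1) + e1 * e2 * e3 * (1 + 2 * p) * (s ^+ 2 - 3)
        by rewrite /p; field; rewrite ?n1 ?n2 ?n3 ?n4 end.
    by rewrite hp hs subrr !mulr0 !addr0.
have := G' _ E; rewrite ger0_norm ?ltxx // /s sqrtC_ge0 ler0n //.
Qed.


Lemma case_P5 (x1 x2 x3 x4 x5 : T) : uniq [:: x1; x2; x3; x4; x5] ->
  h x1 x2 != E0 -> h x2 x3 != E0 -> h x3 x4 != E0 -> h x4 x5 != E0 ->
  h x1 x3 = E0 -> h x1 x4 = E0 -> h x2 x4 = E0 -> h x2 x5 = E0 -> h x3 x5 = E0 ->
  h x1 x5 = E0 -> ~ good h.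
Proof.
move=> us a12 a23 a34 a45 E13 E14 E24 E25 E35 E15.
have E31 := symE0 wf E13; have E41 := symE0 wf E14; have E42 := symE0 wf E24.
have E52 := symE0 wf E25; have E53 := symE0 wf E35; have E51 := symE0 wf E15.
have n1 := entry_nz a12; have R21 := revE wf a12; have C1 := entry_inv a12.
have n2 := entry_nz a23; have R32 := revE wf a23; have C2 := entry_inv a23.
have n3 := entry_nz a34; have R43 := revE wf a34; have C3 := entry_inv a34.
have n4 := entry_nz a45; have R54 := revE wf a45; have C4 := entry_inv a45.
set e1 := entryC (h x1 x2) in n1 R21 C1 *.
set e2 := entryC (h x2 x3) in n2 R32 C2 *.
set e3 := entryC (h x3 x4) in n3 R43 C3 *.
set e4 := entryC (h x4 x5) in n4 R54 C4 *.
set g := fun i : 'I_5 => nth x1 [:: x1; x2; x3; x4; x5] i.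
have ginj : injective g by apply: nth_inj.
set s := sqrtC 3 : algC.
have Cs : s^* = s by exact: s3conj.
apply: (bad_sub ginj wf (r := fun i : 'I_5 => nth 0 [:: 1; s * e1; 2 * e1 * e2; s * e1 * e2 * e3; e1 * e2 * e3 * e4] i)).
  by exists (@Ordinal 5 0 isT); rewrite /= oner_eq0.
rewrite !sum5 /= ?(diagE wf) ?R21 ?R32 ?R43 ?R54 ?E13 ?E31 ?E14 ?E41 ?E24 ?E42 ?E25 ?E52 ?E35 ?E53 ?E15 ?E51 /= -/e1 -/e2 -/e3 -/e4.
rewrite !normCK !(rmorphD, rmorphM, rmorphN, rmorph1, rmorph0, fmorphV, rmorph_nat) /= C1 C2 C3 C4 Cs !invrK.
rewrite -subr_ge0.
match goal with |- is_true (0 <= ?X) =>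
  have -> : X = 0 by field; rewrite ?n1 ?n2 ?n3 ?n4 end.
done.
Qed.

Lemma case_C5 (x1 x2 x3 x4 x5 : T) : uniq [:: x1; x2; x3; x4; x5] ->
  h x1 x2 != E0 -> h x2 x3 != E0 -> h x3 x4 != E0 -> h x4 x5 != E0 ->
  h x1 x3 = E0 -> h x1 x4 = E0 -> h x2 x4 = E0 -> h x2 x5 = E0 -> h x3 x5 = E0 ->
  h x5 x1 != E0 -> ~ good h.
Proof.
move=> us a12 a23 a34 a45 E13 E14 E24 E25 E35 a51.
have E31 := symE0 wf E13; have E41 := symE0 wf E14; have E42 := symE0 wf E24.
have E52 := symE0 wf E25; have E53 := symE0 wf E35.
have n1 := entry_nz a12; have R21 := revE wf a12; have C1 := entry_inv a12.
have n2 := entry_nz a23; have R32 := revE wf a23; have C2 := entry_inv a23.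
have n3 := entry_nz a34; have R43 := revE wf a34; have C3 := entry_inv a34.
have n4 := entry_nz a45; have R54 := revE wf a45; have C4 := entry_inv a45.
have n5 := entry_nz a51; have R15 := revE wf a51; have C5 := entry_inv a51.
have pT : entryC (h x1 x2) * entryC (h x2 x3) * entryC (h x3 x4) * entryC (h x4 x5) * entryC (h x5 x1) \in T6.
  by rewrite !T6_mul ?entry_T6.
set e1 := entryC (h x1 x2) in n1 R21 C1 pT *.
set e2 := entryC (h x2 x3) in n2 R32 C2 pT *.
set e3 := entryC (h x3 x4) in n3 R43 C3 pT *.
set e4 := entryC (h x4 x5) in n4 R54 C4 pT *.
set e5 := entryC (h x5 x1) in n5 R15 C5 pT *.
set g := fun i : 'I_5 => nth x1 [:: x1; x2; x3; x4; x5] i.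
have ginj : injective g by apply: nth_inj.
have [sl|sg] := psi_le pT.
- apply: (bad_sub ginj wf (r := fun i : 'I_5 => nth 0 [:: 1; - e1; e1 * e2; - (e1 * e2 * e3); e1 * e2 * e3 * e4] i)).
    by exists (@Ordinal 5 0 isT); rewrite /= oner_eq0.
  rewrite !sum5 /= ?(diagE wf) ?R21 ?R32 ?R43 ?R54 ?R15 ?E13 ?E31 ?E14 ?E41 ?E24 ?E42 ?E25 ?E52 ?E35 ?E53 /= -/e1 -/e2 -/e3 -/e4 -/e5.
  rewrite !normCK !(rmorphD, rmorphM, rmorphN, rmorph1, rmorph0, fmorphV) /= C1 C2 C3 C4 C5 !invrK.
  rewrite -subr_ge0.
  match goal with |- is_true (0 <= ?X) =>
    have -> : X = 2 * (-1 - (e1 * e2 * e3 * e4 * e5 + (e1 * e2 * e3 * e4 * e5)^-1)) + 3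
      by field; rewrite ?n1 ?n2 ?n3 ?n4 ?n5 end.
  by rewrite addr_ge0 // mulr_ge0 // subr_ge0.
- apply: (bad_sub ginj wf (r := fun i : 'I_5 => nth 0 [:: 1; e1; e1 * e2; e1 * e2 * e3; e1 * e2 * e3 * e4] i)).
    by exists (@Ordinal 5 0 isT); rewrite /= oner_eq0.
  rewrite !sum5 /= ?(diagE wf) ?R21 ?R32 ?R43 ?R54 ?R15 ?E13 ?E31 ?E14 ?E41 ?E24 ?E42 ?E25 ?E52 ?E35 ?E53 /= -/e1 -/e2 -/e3 -/e4 -/e5.
  rewrite !normCK !(rmorphD, rmorphM, rmorphN, rmorph1, rmorph0, fmorphV) /= C1 C2 C3 C4 C5 !invrK.
  rewrite -subr_ge0.
  match goal with |- is_true (0 <= ?X) =>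
    have -> : X = 2 * ((e1 * e2 * e3 * e4 * e5 + (e1 * e2 * e3 * e4 * e5)^-1) - 1) + 3
      by field; rewrite ?n1 ?n2 ?n3 ?n4 ?n5 end.
  by rewrite addr_ge0 // mulr_ge0 // subr_ge0.
Qed.

End Bad.

Lemma uniq3 (T : eqType) (a b c : T) : uniq [:: a; b; c] ->
  [/\ a != b, a != c & b != c].
Proof. by rewrite /= !inE !negb_or andbT => /andP [/andP [-> ->] ->]. Qed.

Lemma uniq4 (T : eqType) (a b c d : T) : uniq [:: a; b; c; d] ->
  [/\ [/\ a != b, a != c & a != d], [/\ b != c & b != d] & c != d].
Proof.
by rewrite /= !inE !negb_or andbT => /andP [/and3P [-> -> ->] /andP [/andP [-> ->] ->]].
Qed.

Lemma uniq5 (T : eqType) (a b c d e : T) : uniq [:: a; b; c; d; e] ->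
  [/\ [/\ a != b, a != c, a != d & a != e], [/\ b != c, b != d & b != e],
      [/\ c != d & c != e] & d != e].
Proof.
rewrite /= !inE !negb_or andbT => /andP [/and4P [-> -> -> ->] /andP [/and3P [-> -> ->] /andP [/andP [-> ->] ->]]].
done.
Qed.

Section Classify.
Variables (T : finType) (h : mgraph T) (wf : mixed_wf h) (x0 : T)
  (conn : forall x y, connect (madj h) x y) (G : good h).

Lemma classify : sw_equiv h (Pk 1) \/ sw_equiv h (Pk 2) \/ sw_equiv h (Pk 3) \/
  sw_equiv h (Pk 4) \/ sw_equiv h C4eq.
Proof.
have D : deg2 h.
  by move=> x a b c xa xb xc ab ac bc; apply: (deg3_bad wf xa xb xc ab ac bc G).
have nadj : forall u a b c, madj h u a -> madj h u b -> a != b -> a != c -> b != c ->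
    h u c = E0.
  move=> u a b c ua ub ab ac bc; apply: nadj_E0; apply/negP => uc.
  exact: (D u a b c ua ub uc ab ac bc).
have sym := madj_symT wf.
have [x [q [uq pq allq]]] := ham_path wf x0 D conn.
case: q uq pq allq => [|x2 [|x3 [|x4 [|x5 q]]]] uq pq allq.
- by left; apply: case_P1 wf _ allq.
- right; left; move: pq => /= /andP [a12 _].
  exact: (case_P2 wf uq allq (adj_neq a12)).
- right; right; left.
  move: pq => /= /and3P [a12 a23 _].
  have [d12 d13 d23] := uniq3 uq.
  have [a13|a13] := boolP (madj h x x3).
    exfalso; apply: (case_C3 wf uq (adj_neq a12) (adj_neq a23)) => //.
    by apply: adj_neq; rewrite sym.
  exact: (case_P3 wf uq allq (adj_neq a12) (adj_neq a23) (nadj_E0 a13)).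
- move: pq => /= /and4P [a12 a23 a34 _].
  have [[d12 d13 d14] [d23 d24] d34] := uniq4 uq.
  have a21 : madj h x2 x by rewrite sym.
  have a32 : madj h x3 x2 by rewrite sym.
  have E13 : h x x3 = E0.
    by apply: (symE0 wf); apply: (nadj x3 x2 x4 x) => //; rewrite eq_sym.
  have E24 : h x2 x4 = E0 by apply: (nadj x2 x x3 x4).
  have [a14|a14] := boolP (madj h x x4); last first.
    by right; right; right; left; exact: (case_P4 wf uq allq (adj_neq a12) (adj_neq a23) (adj_neq a34) E13 E24 (nadj_E0 a14)).
  have a41 : h x4 x != E0 by apply: adj_neq; rewrite sym.
  have pT : entryC (h x x2) * entryC (h x2 x3) * entryC (h x3 x4) * entryC (h x4 x) \in T6
    := T6_mul (T6_mul (T6_mul (entry_T6 (adj_neq a12)) (entry_T6 (adj_neq a23)))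
                 (entry_T6 (adj_neq a34))) (entry_T6 a41).
  case: (psi_cases pT) => [E|[E|E]].
  + by right; right; right; right; exact: (case_C4eq wf uq allq (adj_neq a12) (adj_neq a23) (adj_neq a34) a41 E13 E24 E).
  + by exfalso; apply: (case_C4exact wf uq allq (adj_neq a12) (adj_neq a23) (adj_neq a34) a41 E13 E24 E).
  + by exfalso; apply: (case_C4bad wf uq (adj_neq a12) (adj_neq a23) (adj_neq a34) a41 E13 E24 E).
- exfalso.
  move: pq => /= /and5P [a12 a23 a34 a45 _].
  have u5 : uniq [:: x; x2; x3; x4; x5].
    by move: uq; rewrite -[x :: _]/([:: x; x2; x3; x4; x5] ++ q) cat_uniq => /andP [].
  have [[d12 d13 d14 d15] [d23 d24 d25] [d34 d35] d45] := uniq5 u5.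
  have a21 : madj h x2 x by rewrite sym.
  have a32 : madj h x3 x2 by rewrite sym.
  have a43 : madj h x4 x3 by rewrite sym.
  have E13 : h x x3 = E0.
    by apply: (symE0 wf); apply: (nadj x3 x2 x4 x) => //; rewrite eq_sym.
  have E14 : h x x4 = E0.
    by apply: (symE0 wf); apply: (nadj x4 x3 x5 x) => //; rewrite eq_sym.
  have E24 : h x2 x4 = E0 by apply: (nadj x2 x x3 x4).
  have E25 : h x2 x5 = E0 by apply: (nadj x2 x x3 x5).
  have E35 : h x3 x5 = E0 by apply: (nadj x3 x2 x4 x5).
  have [a15|a15] := boolP (madj h x x5).
    apply: (case_C5 wf u5 (adj_neq a12) (adj_neq a23) (adj_neq a34) (adj_neq a45) E13 E14 E24 E25 E35) => //.
    by apply: adj_neq; rewrite sym.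
  exact: (case_P5 wf u5 (adj_neq a12) (adj_neq a23) (adj_neq a34) (adj_neq a45) E13 E14 E24 E25 E35 (nadj_E0 a15)).
Qed.

End Classify.

Section CompConn.
Variables (n : nat) (g : mgraph 'I_n) (wf : mixed_wf g) (v : 'I_n).

Lemma comp_wf : mixed_wf (comp_graph g v).
Proof.
case: wf => d s; split=> [x|x y]; rewrite /comp_graph; [exact: d | exact: s].
Qed.

Definition croot : comp_vert g v := exist _ v (connect0 _ v).

Lemma comp_conn_root (t : comp_vert g v) : connect (madj (comp_graph g v)) croot t.
Proof.
case: t => x cx.
have /connectP [p pp E] := cx.
have H : forall p u (cu : connect (madj g) v u), path (madj g) u p ->
    connect (madj (comp_graph g v)) croot (exist _ u cu) ->
    forall cl, connect (madj (comp_graph g v)) croot (exist _ (last u p) cl).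
  elim => [|w p' IH] u cu /=.
    by move=> _ C cl; rewrite (_ : exist _ u cl = exist _ u cu) //; apply: val_inj.
  move=> /andP [uw pw] C cl.
  have cw : connect (madj g) v w by apply: connect_trans cu (connect1 uw).
  apply: (IH w cw pw); apply: connect_trans C (connect1 _).
  exact: uw.
move: cx; rewrite E => cx.
apply: (H p v (connect0 _ v) pp); exact: connect0.
Qed.

Lemma comp_conn (s t : comp_vert g v) : connect (madj (comp_graph g v)) s t.
Proof.
have sym : symmetric (madj (comp_graph g v)) by move=> a b; exact: (madj_symT comp_wf a b).
apply: connect_trans (comp_conn_root t).
by rewrite (sym_connect_sym sym); apply: comp_conn_root.
Qed.

End CompConn.

Unset Implicit Arguments.

Theorem theorem6p5 (n : nat) (g : mgraph 'I_n) (wf : mixed_wf g) :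
  (forall a : algC, eigenvalue (Nmat g) a -> `|a| < sqrtC 3) <->
  (forall v : 'I_n,
     sw_equiv (comp_graph g v) (Pk 1) \/ sw_equiv (comp_graph g v) (Pk 2) \/
     sw_equiv (comp_graph g v) (Pk 3) \/ sw_equiv (comp_graph g v) (Pk 4) \/
     sw_equiv (comp_graph g v) C4eq).
Proof.
rewrite good_Nmat; split.
- move=> G v; apply: (classify (comp_wf wf v) (croot g v) (@comp_conn n g wf v)).
  by move=> a E; apply: G; apply: (comp_eig_up E).
- move=> H a E; have [v Ev] := comp_eig_down wf E.
  suff Gc : good (comp_graph g v) by apply: Gc.
  case: (H v) => [S|[S|[S|[S|S]]]]; rewrite (sw_equiv_good S).
  + exact: good_P1.
  + exact: good_P2.
  + exact: good_P3.
  + exact: good_P4.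
  + exact: good_C4eq.
Qed.
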